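(* Let $X$ be a Fréchet space and $A,B$ dense countable subsets of $X$. Then there exists a Banach disk $D$ in $X$ such that $A,B\subseteq X_D$ and both $A$ and $B$ are dense in the Banach space $(X_D,p_D)$.
   Context: A Fréchet space is a complete metrizable locally convex (Hausdorff) space over $\mathbb{K}\in\{\mathbb{R},\mathbb{C}\}$. ''Countable'' means infinite countable. A disk is a bounded, convex, balanced set $D$; $X_D=\mathrm{span}(D)$ with norm $p_D$ the Minkowski functional of $D$; $D$ is a Banach disk if $(X_D,p_D)$ is complete. *)

(* Defs.v *)
From Stdlib Require Import Reals.
Open Scope R_scope.

(** * Scalar field K in {R, C}; C is modelled as R*R. *)
Inductive Kind := KR | KC.

Definition Kt (k : Kind) : Type :=
  match k with KR => R | KC => (R * R)%type end.

Definition Kadd (k : Kind) : Kt k -> Kt k -> Kt k :=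
  match k return Kt k -> Kt k -> Kt k with
  | KR => Rplus
  | KC => fun z w => (fst z + fst w, snd z + snd w)
  end.

Definition Kmul (k : Kind) : Kt k -> Kt k -> Kt k :=
  match k return Kt k -> Kt k -> Kt k with
  | KR => Rmult
  | KC => fun z w => (fst z * fst w - snd z * snd w, fst z * snd w + snd z * fst w)
  end.

Definition KofR (k : Kind) : R -> Kt k :=
  match k return R -> Kt k with
  | KR => fun t => t
  | KC => fun t => (t, 0)
  end.

Definition Kabs (k : Kind) : Kt k -> R :=
  match k return Kt k -> R with
  | KR => Rabs
  | KC => fun z => sqrt (fst z * fst z + snd z * snd z)
  end.

(** * Fréchet spaces over K: vector spaces whose (locally convex, metrizable)
    topology is given by an increasing separating sequence of seminorms,
    and which are complete. *)
Record Frechet (k : Kind) := {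
  V :> Type;
  vadd : V -> V -> V;
  vzero : V;
  vopp : V -> V;
  vscal : Kt k -> V -> V;
  vadd_assoc : forall x y z, vadd x (vadd y z) = vadd (vadd x y) z;
  vadd_comm : forall x y, vadd x y = vadd y x;
  vadd_0 : forall x, vadd x vzero = x;
  vadd_opp : forall x, vadd x (vopp x) = vzero;
  vscal_assoc : forall a b x, vscal a (vscal b x) = vscal (Kmul k a b) x;
  vscal_1 : forall x, vscal (KofR k 1) x = x;
  vscal_distr_v : forall a x y, vscal a (vadd x y) = vadd (vscal a x) (vscal a y);
  vscal_distr_s : forall a b x, vscal (Kadd k a b) x = vadd (vscal a x) (vscal b x);
  sn : nat -> V -> R;
  sn_nonneg : forall n x, 0 <= sn n x;
  sn_triangle : forall n x y, sn n (vadd x y) <= sn n x + sn n y;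
  sn_homog : forall n a x, sn n (vscal a x) = Kabs k a * sn n x;
  sn_mono : forall n x, sn n x <= sn (S n) x;
  sn_sep : forall x, (forall n, sn n x = 0) -> x = vzero;
  complete : forall u : nat -> V,
    (forall n eps, 0 < eps -> exists N, forall p q, (N <= p)%nat -> (N <= q)%nat ->
        sn n (vadd (u p) (vopp (u q))) < eps) ->
    exists l, forall n eps, 0 < eps -> exists N, forall p, (N <= p)%nat ->
        sn n (vadd (u p) (vopp l)) < eps
}.

Arguments vadd {k X} : rename.
Arguments vzero {k X} : rename.
Arguments vopp {k X} : rename.
Arguments vscal {k X} : rename.
Arguments sn {k X} : rename.

Section Defs.
Context {k : Kind} {X : Frechet k}.

Definition vsub (x y : X) : X := vadd x (vopp y).

(** "countable" = infinite countable *)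
Definition countable_inf (A : X -> Prop) : Prop :=
  exists f : nat -> X, (forall n m, f n = f m -> n = m) /\
                       (forall x, A x <-> exists n, f n = x).

Definition dense_in_X (A : X -> Prop) : Prop :=
  forall x n eps, 0 < eps -> exists a, A a /\ sn n (vsub x a) < eps.

Definition bounded (D : X -> Prop) : Prop :=
  forall n, exists M, forall d, D d -> sn n d <= M.

Definition convex (D : X -> Prop) : Prop :=
  forall x y t, D x -> D y -> 0 <= t <= 1 ->
    D (vadd (vscal (KofR k t) x) (vscal (KofR k (1 - t)) y)).

Definition balanced (D : X -> Prop) : Prop :=
  forall a x, Kabs k a <= 1 -> D x -> D (vscal a x).

Definition disk (D : X -> Prop) : Prop := bounded D /\ convex D /\ balanced D.

(** X_D = span(D) *)
Inductive span (D : X -> Prop) : X -> Prop :=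
  | span_0 : span D vzero
  | span_in : forall d, D d -> span D d
  | span_add : forall x y, span D x -> span D y -> span D (vadd x y)
  | span_scal : forall a x, span D x -> span D (vscal a x).

(** [minkowski D x r]: r = p_D(x) = inf { t > 0 | x ∈ t D } *)
Definition minkowski (D : X -> Prop) (x : X) (r : R) : Prop :=
  let S := fun t => 0 < t /\ exists d, D d /\ x = vscal (KofR k t) d in
  (forall t, S t -> r <= t) /\ (forall r', (forall t, S t -> r' <= t) -> r' <= r).

Definition pD_lt (D : X -> Prop) (x : X) (eps : R) : Prop :=
  exists r, minkowski D x r /\ r < eps.

Definition banach_disk (D : X -> Prop) : Prop :=
  disk D /\
  forall u : nat -> X, (forall p, span D (u p)) ->
    (forall eps, 0 < eps -> exists N, forall p q, (N <= p)%nat -> (N <= q)%nat ->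
        pD_lt D (vsub (u p) (u q)) eps) ->
    exists l, span D l /\
      forall eps, 0 < eps -> exists N, forall p, (N <= p)%nat ->
        pD_lt D (vsub (u p) l) eps.

Definition dense_in_XD (D A : X -> Prop) : Prop :=
  forall x, span D x -> forall eps, 0 < eps -> exists a, A a /\ pD_lt D (vsub x a) eps.

End Defs.

(* Main.v *)
Require Import Defs.
From Stdlib Require Import Reals Lra Lia Psatz ZArith Classical ClassicalEpsilon Cantor.
Open Scope R_scope.

Section K.
Variable k : Kind.

Lemma Kabs_nonneg (a : Kt k) : 0 <= Kabs k a.
Proof. destruct k; simpl. apply Rabs_pos. apply sqrt_pos. Qed.

Lemma Kabs_KofR t : Kabs k (KofR k t) = Rabs t.
Proof. destruct k; simpl. reflexivity.
  replace (t*t+0*0) with (Rsqr t) by (unfold Rsqr; ring). apply sqrt_Rsqr_abs. Qed.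

Lemma Kmul_comm (a b : Kt k) : Kmul k a b = Kmul k b a.
Proof. destruct k; simpl. ring. destruct a, b; simpl; f_equal; ring. Qed.

Lemma Kmul_assoc (a b c : Kt k) : Kmul k a (Kmul k b c) = Kmul k (Kmul k a b) c.
Proof. destruct k; simpl. ring. destruct a, b, c; simpl; f_equal; ring. Qed.

Lemma KofR_mul s t : Kmul k (KofR k s) (KofR k t) = KofR k (s*t).
Proof. destruct k; simpl. ring. f_equal; ring. Qed.

Lemma KofR_add s t : Kadd k (KofR k s) (KofR k t) = KofR k (s+t).
Proof. destruct k; simpl. ring. f_equal; ring. Qed.

Lemma Kmul_KofR1 a : Kmul k (KofR k 1) a = a.
Proof. destruct k; simpl. ring. destruct a; simpl; f_equal; ring. Qed.

Lemma Kabs_mul a b : Kabs k (Kmul k a b) = Kabs k a * Kabs k b.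
Proof. destruct k; simpl. apply Rabs_mult. destruct a as [a1 a2], b as [b1 b2]; simpl.
  rewrite <- sqrt_mult by nra. f_equal. ring. Qed.

Lemma Kabs_triangle a b : Kabs k (Kadd k a b) <= Kabs k a + Kabs k b.
Proof. destruct k; simpl. apply Rabs_triang. destruct a as [a1 a2], b as [b1 b2]; simpl.
  set (u := sqrt (a1*a1+a2*a2)). set (v := sqrt (b1*b1+b2*b2)).
  assert (Hu : 0 <= u) by apply sqrt_pos. assert (Hv : 0 <= v) by apply sqrt_pos.
  assert (Hu2 : u*u = a1*a1+a2*a2) by (apply sqrt_sqrt; nra).
  assert (Hv2 : v*v = b1*b1+b2*b2) by (apply sqrt_sqrt; nra).
  rewrite <- (sqrt_Rsqr (u+v)) by lra. apply sqrt_le_1_alt. unfold Rsqr.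
  assert (a1*b1+a2*b2 <= u*v).
  { destruct (Rle_dec (a1*b1+a2*b2) 0). nra.
    apply Rsqr_incr_0_var; [unfold Rsqr;
    replace (u*v*(u*v)) with ((u*u)*(v*v)) by ring; rewrite Hu2, Hv2; pose proof (Rle_0_sqr (a1*b2-a2*b1)); unfold Rsqr in *; nra | nra]. }
  nra. Qed.

Definition Kneg (a : Kt k) := Kmul k (KofR k (-1)) a.
Definition Ksub (a b : Kt k) := Kadd k a (Kneg b).

Lemma Kabs_neg a : Kabs k (Kneg a) = Kabs k a.
Proof. unfold Kneg. rewrite Kabs_mul, Kabs_KofR. replace (Rabs (-1)) with 1. ring. rewrite Rabs_left; lra. Qed.

End K.
Lemma Kmul_0l k a : Kmul k (KofR k 0) a = KofR k 0.
Proof. destruct k; simpl. ring. destruct a; simpl; f_equal; ring. Qed.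

Section V.
Variable k : Kind.
Variable X : Frechet k.
Implicit Types x y z v w : X.

Lemma vadd_0l x : vadd vzero x = x.
Proof. rewrite vadd_comm. apply vadd_0. Qed.

Lemma vadd_cancel z x y : vadd z x = vadd z y -> x = y.
Proof. intro H. rewrite <- (vadd_0l x), <- (vadd_0l y).
  rewrite <- (vadd_opp _ _ z). rewrite (vadd_comm _ _ z (vopp z)).
  rewrite <- !vadd_assoc, H. reflexivity. Qed.

Lemma vscal0 x : vscal (KofR k 0) x = vzero.
Proof. apply (vadd_cancel (vscal (KofR k 0) x)). rewrite vadd_0.
  rewrite <- vscal_distr_s, KofR_add. f_equal. f_equal. ring. Qed.

Lemma vopp_unique x y : vadd x y = vzero -> y = vopp x.
Proof. intro H. apply (vadd_cancel x). rewrite H, vadd_opp. reflexivity. Qed.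

Lemma vscal_m1 x : vscal (KofR k (-1)) x = vopp x.
Proof. apply vopp_unique. rewrite <- (vscal_1 _ _ x) at 1.
  rewrite <- vscal_distr_s, KofR_add. replace (1 + -1) with 0 by ring. apply vscal0. Qed.

Lemma vscal_zero a : vscal a (@vzero k X) = vzero.
Proof. transitivity (vscal a (vscal (KofR k 0) (@vzero k X))).
  f_equal; symmetry; apply vscal0. rewrite vscal_assoc, Kmul_comm, Kmul_0l. apply vscal0. Qed.

Lemma vopp_add x y : vopp (vadd x y) = vadd (vopp x) (vopp y).
Proof. rewrite <- !vscal_m1. apply vscal_distr_v. Qed.

Lemma vopp_opp x : vopp (vopp x) = x.
Proof. symmetry. apply vopp_unique. rewrite vadd_comm. apply vadd_opp. Qed.

Lemma vscal_opp a x : vscal a (vopp x) = vopp (vscal a x).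
Proof. rewrite <- !vscal_m1, !vscal_assoc. f_equal. apply Kmul_comm. Qed.

Lemma Kabs_m1 : Kabs k (KofR k (-1)) = 1.
Proof. rewrite Kabs_KofR. rewrite Rabs_left; lra. Qed.

Lemma sn_opp n x : sn n (vopp x) = sn n x.
Proof. rewrite <- vscal_m1, sn_homog, Kabs_m1. ring. Qed.

Lemma sn_zero n : sn n (@vzero k X) = 0.
Proof. transitivity (sn n (vscal (KofR k 0) (@vzero k X))).
  f_equal; symmetry; apply vscal0. rewrite sn_homog, Kabs_KofR, Rabs_R0. ring. Qed.

Lemma vsub_chain x y z : vsub x z = vadd (vsub x y) (vsub y z).
Proof. unfold vsub. rewrite <- vadd_assoc. f_equal.
  rewrite vadd_assoc, (vadd_comm _ _ (vopp y)), vadd_opp, vadd_0l. reflexivity. Qed.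

Lemma vsub_add2 v w a b : vsub (vadd v w) (vadd a b) = vadd (vsub v a) (vsub w b).
Proof. unfold vsub. rewrite vopp_add. rewrite <- !vadd_assoc. f_equal.
  rewrite !vadd_assoc. f_equal. apply vadd_comm. Qed.

Lemma vsub_scal a x y : vsub (vscal a x) (vscal a y) = vscal a (vsub x y).
Proof. unfold vsub. rewrite vscal_distr_v, vscal_opp. reflexivity. Qed.

Lemma vsub_scal_l a b x : vsub (vscal a x) (vscal b x) = vscal (Ksub k a b) x.
Proof. unfold vsub, Ksub, Kneg. rewrite vscal_distr_s, <- vscal_assoc, vscal_m1. reflexivity. Qed.

Lemma vsub_swap x y : vsub y x = vopp (vsub x y).
Proof. unfold vsub. rewrite vopp_add, vopp_opp. apply vadd_comm. Qed.

Lemma vsub_refl x : vsub x x = vzero.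
Proof. apply vadd_opp. Qed.

Lemma vopp_zero : vopp (@vzero k X) = vzero.
Proof. rewrite <- vscal_m1. apply vscal_zero. Qed.

Lemma vsub_0 x : vsub x vzero = x.
Proof. unfold vsub. rewrite vopp_zero. apply vadd_0. Qed.

Lemma sn_sub_sym n x y : sn n (vsub x y) = sn n (vsub y x).
Proof. rewrite (vsub_swap x y), sn_opp. reflexivity. Qed.

Lemma sn_tri_sub n x y z : sn n (vsub x z) <= sn n (vsub x y) + sn n (vsub y z).
Proof. rewrite (vsub_chain x y z). apply sn_triangle. Qed.

Lemma sn_mono_le n m x : (n <= m)%nat -> sn n x <= sn m x.
Proof. induction 1. lra. pose proof (sn_mono _ _ m x). lra. Qed.

Lemma vsub_add_l x y z : vsub (vadd x y) (vadd x z) = vsub y z.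
Proof. rewrite vsub_add2, vsub_refl, vadd_0l. reflexivity. Qed.

Lemma vadd_sub x y : vadd y (vsub x y) = x.
Proof. unfold vsub. rewrite (vadd_comm _ _ x), vadd_assoc, vadd_opp, vadd_0l. reflexivity. Qed.

End V.

Lemma le_eps a b : (forall eps, 0 < eps -> a < b + eps) -> a <= b.
Proof. intro H. destruct (Rle_dec a b) as [h|h]; auto.
  specialize (H ((a-b)/2)). lra. Qed.

Fixpoint rsum (d : nat -> R) m := match m with 0%nat => 0 | S m => rsum d m + d m end.

Lemma rsum_scal c d m : rsum (fun i => c * d i) m = c * rsum d m.
Proof. induction m; simpl; [ring | rewrite IHm; ring]. Qed.
Lemma rsum_add d e m : rsum (fun i => d i + e i) m = rsum d m + rsum e m.
Proof. induction m; simpl; [ring | rewrite IHm; ring]. Qed.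
Lemma rsum_shift d I m : rsum (fun i => d (I + i)%nat) m = rsum d (I + m) - rsum d I.
Proof. induction m; simpl. rewrite Nat.add_0_r; ring.
  rewrite IHm, Nat.add_succ_r. simpl. ring. Qed.

Lemma rsum_tail d r : (forall m, rsum d m <= r) -> forall eta, 0 < eta ->
  exists I, forall m, rsum d (I + m) - rsum d I <= eta.
Proof. intros Hb eta Heta.
  destruct (completeness (fun x => exists m, x = rsum d m)) as [L [HL1 HL2]].
  { exists r. intros x [m ->]. apply Hb. }
  { exists (rsum d 0). eauto. }
  destruct (classic (exists I, L - eta < rsum d I)) as [[I HI]|HN].
  - exists I. intro m. assert (rsum d (I+m) <= L) by (apply HL1; eauto). lra.
  - exfalso. assert (L <= L - eta). { apply HL2. intros x [m ->].
      destruct (Rle_dec (rsum d m) (L - eta)); auto. exfalso; apply HN; exists m; lra. }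
    lra. Qed.

Set Implicit Arguments.
Section Disk.
Variable k : Kind.
Variable X : Frechet k.
Implicit Types x y z v w : X.

Fixpoint psum (s : nat -> X) m : X := match m with 0%nat => vzero | S m => vadd (psum s m) (s m) end.

Definition conv (f : nat -> X) v := forall n eps, 0 < eps -> exists N, forall m, (N <= m)%nat ->
  sn n (vsub (f m) v) < eps.

Lemma psum_scal a s m : psum (fun i => vscal a (s i)) m = vscal a (psum s m).
Proof. induction m; simpl. symmetry; apply vscal_zero. rewrite IHm, vscal_distr_v. reflexivity. Qed.

Lemma psum_add s t m : psum (fun i => vadd (s i) (t i)) m = vadd (psum s m) (psum t m).
Proof. induction m; simpl. symmetry; apply vadd_0. rewrite IHm.
  rewrite <- !vadd_assoc. f_equal. rewrite !vadd_assoc. f_equal. apply vadd_comm. Qed.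

Lemma vsub_sub_r (a b c : X) : vsub (vsub a c) (vsub b c) = vsub a b.
Proof. unfold vsub at 2 3. rewrite vsub_add2, vsub_refl, vadd_0. reflexivity. Qed.

Lemma psum_shift s I m : psum (fun i => s (I + i)%nat) m = vsub (psum s (I + m)) (psum s I).
Proof. induction m; simpl. rewrite Nat.add_0_r, vsub_refl. reflexivity.
  rewrite IHm, Nat.add_succ_r. simpl. unfold vsub.
  rewrite <- !vadd_assoc. f_equal. apply vadd_comm. Qed.

Lemma conv_scal a f v : conv f v -> conv (fun m => vscal a (f m)) (vscal a v).
Proof. intros H n eps Heps.
  destruct (H n (eps / (Kabs k a + 1))) as [N HN].
  { apply Rdiv_lt_0_compat; auto. pose proof (Kabs_nonneg k a); lra. }
  exists N. intros m Hm. rewrite vsub_scal, sn_homog.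
  specialize (HN m Hm). pose proof (Kabs_nonneg k a).
  apply Rle_lt_trans with (Kabs k a * (eps / (Kabs k a + 1))).
  apply Rmult_le_compat_l; lra.
  assert (E : eps / (Kabs k a + 1) * (Kabs k a + 1) = eps) by (field; lra).
  assert (0 < eps / (Kabs k a + 1)) by (apply Rdiv_lt_0_compat; lra). nra. Qed.

Lemma conv_ext f f' v : (forall m, f m = f' m) -> conv f v -> conv f' v.
Proof. intros E H n eps He. destruct (H n eps He) as [N HN]. exists N. intros m Hm. rewrite <- E. auto. Qed.

Lemma conv_sub f v (c : X) : conv f v -> conv (fun m => vsub (f m) c) (vsub v c).
Proof. intros H n eps He. destruct (H n eps He) as [N HN]. exists N. intros m Hm.
  rewrite vsub_sub_r. auto. Qed.

Lemma conv_eventually f v N : (forall m, (N <= m)%nat -> f m = v) -> conv f v.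
Proof. intros H n eps He. exists N. intros m Hm. rewrite H, vsub_refl, sn_zero by auto. auto. Qed.

Lemma conv_sub_seq f v (phi : nat -> nat) : conv f v -> (forall i, (i <= phi i)%nat) ->
  conv (fun i => f (phi i)) v.
Proof. intros H Hp n eps He. destruct (H n eps He) as [N HN]. exists N. intros m Hm.
  apply HN. specialize (Hp m). lia. Qed.

Variable g : nat -> X.

Inductive Dr : R -> X -> Prop :=
| Dr_gen : forall c j, Dr (Kabs k c) (vscal c (g j))
| Dr_ser : forall (s : nat -> X) (d : nat -> R) r v,
    (forall i, Dr (d i) (s i)) -> (forall I, rsum d I <= r) -> conv (psum s) v -> Dr r v.

Lemma Dr_nonneg r v : Dr r v -> 0 <= r.
Proof. destruct 1. apply Kabs_nonneg. apply (H0 0%nat). Qed.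

Lemma Dr_zero : Dr 0 vzero.
Proof. pose proof (Dr_gen (KofR k 0) 0) as H. rewrite vscal0, Kabs_KofR, Rabs_R0 in H. exact H. Qed.

Lemma Dr_add_le r r' R' v w : Dr r v -> Dr r' w -> r + r' <= R' -> Dr R' (vadd v w).
Proof. intros H1 H2 Hle.
  pose proof (Dr_nonneg H1). pose proof (Dr_nonneg H2).
  apply (Dr_ser (fun i => match i with 0%nat => v | 1%nat => w | _ => vzero end)
                (fun i => match i with 0%nat => r | 1%nat => r' | _ => 0 end)).
  - intros [|[|i]]; auto. apply Dr_zero.
  - intro I. assert (forall m, rsum (fun i => match i with 0%nat => r | 1%nat => r' | _ => 0 end) (2 + m) = r + r').
    { induction m. simpl. ring. rewrite Nat.add_succ_r. simpl. simpl in IHm. rewrite IHm. ring. }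
    destruct I as [|[|I]]; simpl; try lra. specialize (H3 I). simpl in H3. lra.
  - apply conv_eventually with 2%nat. intros m Hm.
    replace m with (2 + (m - 2))%nat by lia. generalize (m-2)%nat. induction n.
    simpl. rewrite vadd_0l. reflexivity. rewrite Nat.add_succ_r. simpl. simpl in IHn. rewrite IHn. apply vadd_0.
Qed.

Lemma Dr_mono r r' v : Dr r v -> r <= r' -> Dr r' v.
Proof. intros H Hle. rewrite <- (vadd_0 _ _ v). eapply Dr_add_le. exact H. apply Dr_zero. lra. Qed.

Lemma Dr_scal r v a : Dr r v -> Dr (Kabs k a * r) (vscal a v).
Proof. induction 1.
  - rewrite vscal_assoc, <- Kabs_mul. apply Dr_gen.
  - apply (Dr_ser (fun i => vscal a (s i)) (fun i => Kabs k a * d i)).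
    + auto.
    + intro I. rewrite rsum_scal. apply Rmult_le_compat_l. apply Kabs_nonneg. auto.
    + eapply conv_ext. 2: apply conv_scal; eauto. intro m. simpl. symmetry. apply psum_scal.
Qed.

Hypothesis g_bd : forall n, exists M, 0 <= M /\ forall j, sn n (g j) <= M.

Lemma Dr_bound n : exists M, 0 <= M /\ forall r v, Dr r v -> sn n v <= M * r.
Proof. destruct (g_bd n) as [M [HM Hg]]. exists M. split; auto.
  induction 1.
  - rewrite sn_homog. rewrite Rmult_comm. apply Rmult_le_compat_r. apply Kabs_nonneg. auto.
  - assert (Hp : forall m, sn n (psum s m) <= M * rsum d m).
    { induction m; simpl. rewrite sn_zero; lra.
      pose proof (sn_triangle _ _ n (psum s m) (s m)). specialize (H0 m). lra. }
    apply le_eps. intros eps He. destruct (H2 n eps He) as [N HN]. specialize (HN N (le_n _)).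
    rewrite <- (vadd_sub _ _ v (psum s N)). eapply Rle_lt_trans. apply sn_triangle.
    rewrite sn_sub_sym. specialize (Hp N). specialize (H1 N).
    assert (M * rsum d N <= M * r) by (apply Rmult_le_compat_l; auto). lra.
Qed.

Lemma Dr_tail s d r v : (forall i, Dr (d i) (s i)) -> (forall I, rsum d I <= r) -> conv (psum s) v ->
  forall eta, 0 < eta -> exists I, Dr eta (vsub v (psum s I)).
Proof. intros Hs Hd Hc eta He. destruct (rsum_tail d r Hd eta He) as [I HI]. exists I.
  apply (Dr_ser (fun i => s (I + i)%nat) (fun i => d (I + i)%nat)).
  - auto.
  - intro m. rewrite rsum_shift. auto.
  - eapply conv_ext. intro m. symmetry. apply psum_shift.
    intros n eps Heps. destruct (Hc n eps Heps) as [N HN]. exists N. intros m Hm.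
    rewrite vsub_sub_r. apply HN. lia.
Qed.

End Disk.
Set Implicit Arguments.

Section Mk.
Variable k : Kind.
Variable X : Frechet k.
Variable g : nat -> X.
Hypothesis g_bd : forall n, exists M, 0 <= M /\ forall j, sn n (g j) <= M.

Definition DD : X -> Prop := Dr X g 1.

Lemma DD_disk : disk DD.
Proof. split; [|split].
  - intro n. destruct (Dr_bound X g g_bd n) as [M [HM H]]. exists (M * 1). intros d Hd. apply H. exact Hd.
  - intros x y t Hx Hy Ht. eapply Dr_add_le.
    apply Dr_scal. exact Hx. apply Dr_scal. exact Hy.
    rewrite !Kabs_KofR, !Rabs_pos_eq by lra. lra.
  - intros a x Ha Hx. eapply Dr_mono. apply Dr_scal. exact Hx. lra.
Qed.

Lemma Dr_cone t z : 0 < t -> Dr X g t z -> exists d, DD d /\ z = vscal (KofR k t) d.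
Proof. intros Ht H. exists (vscal (KofR k (/t)) z). split.
  - unfold DD. replace 1 with (Kabs k (KofR k (/t)) * t). apply Dr_scal; auto.
    rewrite Kabs_KofR, Rabs_pos_eq. field. lra. left. apply Rinv_0_lt_compat. lra.
  - rewrite vscal_assoc, KofR_mul, Rinv_r, vscal_1 by lra. reflexivity.
Qed.

Lemma DD_cone d t : DD d -> 0 <= t -> Dr X g t (vscal (KofR k t) d).
Proof. intros H Ht. replace t with (Kabs k (KofR k t) * 1) at 1. apply Dr_scal; auto.
  rewrite Kabs_KofR, Rabs_pos_eq; lra. Qed.

Lemma span_Dr x : span DD x -> exists t, Dr X g t x.
Proof. induction 1.
  - exists 0. apply Dr_zero.
  - exists 1. exact H.
  - destruct IHspan1 as [t1 H1], IHspan2 as [t2 H2]. exists (t1+t2). eapply Dr_add_le; eauto. lra.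
  - destruct IHspan as [t Ht]. eexists. apply Dr_scal. exact Ht.
Qed.

Lemma Dr_span t x : Dr X g t x -> span DD x.
Proof. intro H. pose proof (Dr_nonneg H).
  destruct (Dr_cone (t := t+1) (z := x)) as [d [Hd ->]]. lra. eapply Dr_mono; eauto; lra.
  apply span_scal. apply span_in. exact Hd. Qed.

Lemma pD_of_Dr z t eps : Dr X g t z -> t < eps -> pD_lt DD z eps.
Proof. intros H Hlt. pose proof (Dr_nonneg H) as Ht0.
  set (S := fun t => 0 < t /\ exists d, DD d /\ z = vscal (KofR k t) d).
  assert (HS : S ((t+eps)/2)).
  { split. lra. apply Dr_cone. lra. eapply Dr_mono; eauto; lra. }
  destruct (completeness (fun y => S (-y))) as [m [Hm1 Hm2]].
  { exists 0. intros y Hy. destruct Hy. lra. }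
  { exists (- ((t+eps)/2)). rewrite Ropp_involutive. exact HS. }
  exists (-m). split.
  - split.
    + intros t' Ht'. assert (-t' <= m) by (apply Hm1; rewrite Ropp_involutive; exact Ht'). lra.
    + intros r' Hr'. assert (m <= -r'). { apply Hm2. intros y Hy. specialize (Hr' _ Hy). lra. } lra.
  - assert (-((t+eps)/2) <= m) by (apply Hm1; rewrite Ropp_involutive; exact HS). lra.
Qed.

Lemma Dr_of_pD z eps : pD_lt DD z eps -> exists t, t < eps /\ Dr X g t z.
Proof. intros [r [[H1 H2] Hr]].
  destruct (classic (exists t, (0 < t /\ exists d, DD d /\ z = vscal (KofR k t) d) /\ t < eps)) as [[t [[Ht [d [Hd ->]]] Hte]]|HN].
  - exists t. split; auto. apply DD_cone; auto; lra.
  - exfalso. assert (eps <= r). { apply H2. intros t Ht. destruct (Rle_dec eps t); auto.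
      exfalso. apply HN. exists t. split; auto; lra. } lra.
Qed.

Lemma half_pow_small eps : 0 < eps -> exists K, (/2)^K < eps.
Proof. intro He. destruct (pow_lt_1_zero (/2)) with eps as [N HN]; auto.
  rewrite Rabs_pos_eq; lra. exists N. specialize (HN N (le_n _)).
  rewrite Rabs_pos_eq in HN; auto. apply pow_le. lra. Qed.

Lemma DD_banach : banach_disk DD.
Proof. split. apply DD_disk. intros u Hu Hc.
  assert (H1 : forall eps, 0 < eps -> exists N, forall p q, (N <= p)%nat -> (N <= q)%nat ->
      Dr X g eps (vsub (u p) (u q))).
  { intros eps He. destruct (Hc eps He) as [N HN]. exists N. intros p q Hp Hq.
    destruct (Dr_of_pD (HN p q Hp Hq)) as [t [Ht HD]]. eapply Dr_mono; eauto. lra. }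
  destruct (complete _ X u) as [l Hl].
  { intros n eps He. destruct (Dr_bound X g g_bd n) as [M [HM HB]].
    destruct (H1 (eps / (M+1))) as [N HN]. apply Rdiv_lt_0_compat; lra.
    exists N. intros p q Hp Hq. specialize (HB _ _ (HN p q Hp Hq)). unfold vsub in HB.
    assert (E : eps / (M+1) * (M+1) = eps) by (field; lra).
    assert (0 < eps / (M+1)) by (apply Rdiv_lt_0_compat; lra). nra. }
  assert (Hl' : conv X u l) by exact Hl.
  assert (HN : forall j, exists N, forall p q, (N <= p)%nat -> (N <= q)%nat ->
      Dr X g ((/2)^j) (vsub (u p) (u q))).
  { intro j. apply H1. apply pow_lt. lra. }
  destruct (constructive_indefinite_description _ (choice _ HN)) as [N HNs].
  clear HN.
  set (M := fix M j := match j with 0%nat => N 0%nat | S j => S (Nat.max (M j) (N (S j))) end).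
  assert (HM1 : forall j, (N j <= M j)%nat). { destruct j; simpl; lia. }
  assert (HM2 : forall j, (M j <= M (S j))%nat). { intro j; simpl; lia. }
  assert (HM3 : forall i j, (i <= j)%nat -> (M i <= M j)%nat).
  { induction 1. lia. pose proof (HM2 m). lia. }
  assert (HM4 : forall j, (j <= M j)%nat). { induction j; simpl; lia. }
  assert (Htail : forall K, Dr X g (2 * (/2)^K) (vsub l (u (M K)))).
  { intro K. apply (Dr_ser (fun i => vsub (u (M (S (K+i)%nat))) (u (M (K+i)%nat))) (fun i => (/2)^(K+i)%nat)).
    - intro i. apply HNs. specialize (HM2 (K+i)%nat). specialize (HM1 (K+i)%nat). lia. apply HM1.
    - intro I. assert (E : rsum (fun i => (/2)^(K+i)%nat) I = 2 * (/2)^K * (1 - (/2)^I)).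
      { induction I; simpl. ring. rewrite IHI, pow_add. simpl.
        field. }
      rewrite E. assert (0 < (/2)^K) by (apply pow_lt; lra).
      assert (0 < (/2)^I) by (apply pow_lt; lra). nra.
    - assert (E : forall I, psum X (fun i => vsub (u (M (S (K+i)%nat))) (u (M (K+i)%nat))) I = vsub (u (M (K+I)%nat)) (u (M K))).
      { induction I; cbn [psum]. rewrite Nat.add_0_r, vsub_refl. reflexivity.
        rewrite IHI, vadd_comm, <- vsub_chain, Nat.add_succ_r. reflexivity. }
      eapply conv_ext. intro m. symmetry. apply E.
      apply conv_sub. apply conv_sub_seq with (phi := fun I => M (K+I)%nat). exact Hl'.
      intro i. specialize (HM4 (K+i)%nat). lia. }
  exists l. split.
  - rewrite <- (vadd_sub _ _ l (u (M 0%nat))). apply span_add. apply Hu. eapply Dr_span. apply Htail.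
  - intros eps He. destruct (@half_pow_small (eps/4)) as [K HK]. lra.
    exists (M K). intros p Hp. apply pD_of_Dr with (3 * (/2)^K).
    2: { assert (0 < (/2)^K) by (apply pow_lt; lra). lra. }
    rewrite (vsub_chain _ _ (u p) (u (M K)) l). eapply Dr_add_le.
    pose proof (HM1 K). apply (HNs K); lia. rewrite vsub_swap, <- vscal_m1. apply Dr_scal. apply Htail.
    rewrite Kabs_m1. lra.
Qed.

End Mk.
Set Implicit Arguments.

Section Ap.
Variable k : Kind.
Variable X : Frechet k.
Variable g : nat -> X.
Variable P : X -> Prop.
Variable lam : nat -> Kt k.

Definition approx (v : X) := forall eps, 0 < eps -> exists a, P a /\ Dr X g eps (vsub v a).

Hypothesis H_sum : forall a1 a2, P a1 -> P a2 -> approx (vadd a1 a2).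
Hypothesis H_scal : forall a j, P a -> approx (vscal (lam j) a).
Hypothesis H_lam : forall c eps, 0 < eps -> exists j, Kabs k (Ksub k c (lam j)) < eps.
Hypothesis H_gen : forall j, approx (g j).

Lemma approx_add v w : approx v -> approx w -> approx (vadd v w).
Proof. intros Hv Hw eps He.
  destruct (Hv (eps/3)) as [a1 [P1 D1]]. lra. destruct (Hw (eps/3)) as [a2 [P2 D2]]. lra.
  destruct (@H_sum a1 a2 P1 P2 (eps/3)) as [a [Pa Da]]. lra.
  exists a. split; auto. rewrite (vsub_chain _ _ _ (vadd a1 a2)), vsub_add2.
  eapply Dr_add_le. eapply Dr_add_le. exact D1. exact D2. apply Rle_refl. exact Da. lra. Qed.

Lemma approx_scal c v t : approx v -> Dr X g t v -> approx (vscal c v).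
Proof. intros Hv Ht eps He. pose proof (Dr_nonneg Ht) as Ht0.
  destruct (@H_lam c (eps / (3 * (t+1)))) as [j Hj]. apply Rdiv_lt_0_compat; lra.
  set (mu := lam j) in *. pose proof (Kabs_nonneg k mu) as Hmu.
  destruct (Hv (eps / (3 * (Kabs k mu + 1)))) as [a1 [P1 D1]]. apply Rdiv_lt_0_compat; lra.
  destruct (@H_scal a1 j P1 (eps/3)) as [a [Pa Da]]. lra.
  exists a. split; auto.
  rewrite (vsub_chain _ _ _ (vscal mu v)), (vsub_chain _ _ (vscal mu v) (vscal mu a1)).
  rewrite vsub_scal_l, vsub_scal.
  eapply Dr_add_le. apply Dr_scal. exact Ht. eapply Dr_add_le. apply Dr_scal. exact D1. exact Da.
  apply Rle_refl.
  assert (E1 : Kabs k (Ksub k c mu) * t <= eps/3).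
  { assert (Kabs k (Ksub k c mu) * t <= eps / (3 * (t+1)) * t).
    { apply Rmult_le_compat_r; lra. }
    assert (eps / (3 * (t+1)) * t <= eps/3).
    { unfold Rdiv. rewrite Rinv_mult. 
      assert (0 < / (t+1)) by (apply Rinv_0_lt_compat; lra).
      assert (/ (t+1) * t <= 1). { apply Rmult_le_reg_l with (t+1). lra. field_simplify; lra. }
      assert (0 < eps * /3) by lra. nra. }
    lra. }
  assert (E2 : Kabs k mu * (eps / (3 * (Kabs k mu + 1))) <= eps/3).
  { unfold Rdiv. rewrite Rinv_mult.
    assert (0 < / (Kabs k mu+1)) by (apply Rinv_0_lt_compat; lra).
    assert (Kabs k mu * / (Kabs k mu+1) <= 1). { apply Rmult_le_reg_l with (Kabs k mu+1). lra. field_simplify; lra. }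
    assert (0 < eps * /3) by lra.
    replace (Kabs k mu * (eps * (/ 3 * / (Kabs k mu + 1)))) with ((Kabs k mu * / (Kabs k mu+1)) * (eps * /3)) by ring.
    nra. }
  lra. Qed.

Lemma approx_closed v : (forall eta, 0 < eta -> exists w, approx w /\ Dr X g eta (vsub v w)) -> approx v.
Proof. intros H eps He. destruct (H (eps/2)) as [w [Hw Dw]]. lra.
  destruct (Hw (eps/2)) as [a [Pa Da]]. lra. exists a. split; auto.
  rewrite (vsub_chain _ _ _ w). eapply Dr_add_le; eauto. lra. Qed.

Lemma approx_zero : approx vzero.
Proof. assert (Hg : Dr X g (Kabs k (KofR k 1)) (g 0)) by (rewrite <- (vscal_1 _ _ (g 0)) at 1; apply Dr_gen).
  pose proof (approx_scal (KofR k 0) (H_gen 0) Hg) as H.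
  rewrite vscal0 in H. apply H. Qed.

Lemma approx_Dr t v : Dr X g t v -> approx v.
Proof. induction 1.
  - eapply approx_scal. apply H_gen. rewrite <- (vscal_1 _ _ (g j)) at 1. apply Dr_gen.
  - apply approx_closed. intros eta He. destruct (Dr_tail s d H H1 H2 He) as [I HI].
    exists (psum X s I). split; auto. clear HI. induction I; simpl. apply approx_zero.
    apply approx_add; auto.
Qed.

Lemma approx_dense : dense_in_XD (Dr X g 1) P.
Proof. intros x Hx eps He. destruct (span_Dr Hx) as [t Ht].
  destruct (@approx_Dr t x Ht (eps/2)) as [a [Pa Da]]. lra.
  exists a. split; auto. eapply pD_of_Dr. exact Da. lra. Qed.

End Ap.
Unset Implicit Arguments.

Lemma small_inv eps : 0 < eps -> exists n : nat, / (INR n + 1) < eps.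
Proof. intro He. destruct (archimed (/eps)) as [H1 H2].
  assert (0 < /eps) by (apply Rinv_0_lt_compat; lra).
  assert (Hz : (0 < up (/eps))%Z) by (apply lt_0_IZR; lra).
  exists (Z.to_nat (up (/eps))). rewrite INR_IZR_INZ, Z2Nat.id by lia.
  rewrite <- (Rinv_inv eps) at 2. apply Rinv_lt_contravar. apply Rmult_lt_0_compat; lra. lra. Qed.

Lemma IZR_split z : IZR z = INR (Z.to_nat z) - INR (Z.to_nat (- z)).
Proof. destruct z; simpl; unfold IZR; rewrite ?INR_IPR; simpl; lra. Qed.

Definition lamR (n : nat) : R :=
  let (a, r) := Cantor.of_nat n in let (b, c) := Cantor.of_nat r in (INR a - INR b) / (INR c + 1).

Lemma lamR_dense x eps : 0 < eps -> exists n, Rabs (x - lamR n) < eps.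
Proof. intro He. destruct (small_inv eps He) as [c Hc].
  assert (Hc0 : 0 < INR c + 1) by (pose proof (pos_INR c); lra).
  set (z := up (x * (INR c + 1))). destruct (archimed (x * (INR c + 1))) as [H1 H2]. fold z in H1, H2.
  exists (Cantor.to_nat (Z.to_nat z, Cantor.to_nat (Z.to_nat (-z), c))).
  unfold lamR. rewrite !Cantor.cancel_of_to. rewrite <- IZR_split.
  assert (0 < IZR z / (INR c + 1) - x <= / (INR c + 1)).
  { split. apply Rmult_lt_reg_r with (INR c + 1). lra. field_simplify; lra.
    apply Rmult_le_reg_r with (INR c + 1). lra. field_simplify; lra. }
  rewrite Rabs_minus_sym, Rabs_pos_eq; lra. Qed.

Definition lam (k : Kind) : nat -> Kt k :=
  match k return nat -> Kt k with
  | KR => lamR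
  | KC => fun n => let (n1, n2) := Cantor.of_nat n in (lamR n1, lamR n2)
  end.

Lemma lam_dense k c eps : 0 < eps -> exists j, Kabs k (Ksub k c (lam k j)) < eps.
Proof. intro He. destruct k.
  - destruct (lamR_dense c eps He) as [n Hn]. exists n. unfold Ksub, Kneg. simpl.
    replace (c + -1 * lamR n) with (c - lamR n) by ring. exact Hn.
  - destruct c as [c1 c2]. destruct (lamR_dense c1 (eps/2)) as [n1 H1]. lra.
    destruct (lamR_dense c2 (eps/2)) as [n2 H2]. lra.
    exists (Cantor.to_nat (n1, n2)).
    assert (E0 : lam KC (Cantor.to_nat (n1, n2)) = (lamR n1, lamR n2)) by (unfold lam; rewrite Cantor.cancel_of_to; reflexivity).
    rewrite E0. unfold Ksub, Kneg. simpl.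
    set (u := c1 + (-1 * lamR n1 - 0 * lamR n2)). set (v := c2 + (-1 * lamR n2 + 0 * lamR n1)).
    assert (Eu : u = c1 - lamR n1) by (unfold u; ring). assert (Ev : v = c2 - lamR n2) by (unfold v; ring).
    rewrite Eu, Ev in *. clear u v Eu Ev.
    apply Rle_lt_trans with (Rabs (c1 - lamR n1) + Rabs (c2 - lamR n2)); [|lra].
    rewrite <- (sqrt_Rsqr (Rabs _ + Rabs _)) by (pose proof (Rabs_pos (c1 - lamR n1)); pose proof (Rabs_pos (c2 - lamR n2)); lra).
    apply sqrt_le_1_alt. unfold Rsqr.
    pose proof (Rabs_pos (c1 - lamR n1)); pose proof (Rabs_pos (c2 - lamR n2)).
    idtac.
    assert (E: forall t, t * t = Rabs t * Rabs t). { intro t. rewrite <- Rabs_mult. rewrite Rabs_pos_eq; nra. }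
    rewrite (E (c1 - lamR n1)), (E (c2 - lamR n2)). nra.
Qed.

Lemma inv_m_pos (m : nat) : 0 < / (INR m + 1).
Proof. apply Rinv_0_lt_compat. pose proof (pos_INR m). lra. Qed.


Lemma rsum_nonneg d n : (forall i, 0 <= d i) -> 0 <= rsum d n.
Proof. intro Hd. induction n; simpl. lra. specialize (Hd n). lra. Qed.

Lemma rsum_ge d n j : (forall i, 0 <= d i) -> (j < n)%nat -> d j <= rsum d n.
Proof. intros Hd Hj. induction Hj; simpl.
  - pose proof (rsum_nonneg d j Hd). lra.
  - specialize (Hd m). lra. Qed.

Section Fin.
Variable k : Kind.
Variable X : Frechet k.
Variables A B : X -> Prop.
Variables eA eB : nat -> X.
Hypothesis hA : forall x, A x <-> exists n, eA n = x.
Hypothesis hB : forall x, B x <-> exists n, eB n = x.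
Hypothesis dA : dense_in_X A.
Hypothesis dB : dense_in_X B.

Definition pick (P : X -> Prop) (dP : dense_in_X P) (y : X) (n m : nat) : X :=
  proj1_sig (constructive_indefinite_description _ (dP y n (/ (INR m + 1)) (inv_m_pos m))).

Lemma pick_spec P dP y n m : P (pick P dP y n m) /\ sn n (vsub y (pick P dP y n m)) < / (INR m + 1).
Proof. unfold pick. destruct constructive_indefinite_description as [a Ha]. simpl. exact Ha. Qed.

Definition genv (P : X -> Prop) (dP : dense_in_X P) (y : X) (j m : nat) : X :=
  vscal (KofR k (INR m + 1)) (vsub y (pick P dP y j m)).

Definition gg (j : nat) : X :=
  let (t, r) := Cantor.of_nat j in let (i, r') := Cantor.of_nat r in let (i', m) := Cantor.of_nat r' in
  match t with
  | 0%nat => vscal (KofR k (/ (1 + sn j (eA i)))) (eA i)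
  | 1%nat => vscal (KofR k (/ (1 + sn j (eB i)))) (eB i)
  | 2%nat => genv A dA (vadd (eA i) (eA i')) j m
  | 3%nat => genv B dB (vadd (eB i) (eB i')) j m
  | 4%nat => genv A dA (vscal (lam k i') (eA i)) j m
  | 5%nat => genv B dB (vscal (lam k i') (eB i)) j m
  | 6%nat => genv A dA (eB i) j m
  | _ => genv B dB (eA i) j m
  end.

Definition code t i i' m := Cantor.to_nat (t, Cantor.to_nat (i, Cantor.to_nat (i', m))).

Lemma genv_bound P dP y j m : sn j (genv P dP y j m) <= 1.
Proof. unfold genv. rewrite sn_homog, Kabs_KofR. pose proof (pos_INR m).
  rewrite Rabs_pos_eq by lra. destruct (pick_spec P dP y j m) as [_ H0].
  assert (E : (INR m + 1) * / (INR m + 1) = 1) by (field; lra).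
  pose proof (sn_nonneg _ _ j (vsub y (pick P dP y j m))). nra. Qed.

Lemma scal_bound j (x : X) : sn j (vscal (KofR k (/ (1 + sn j x))) x) <= 1.
Proof. rewrite sn_homog, Kabs_KofR. pose proof (sn_nonneg _ _ j x).
  rewrite Rabs_pos_eq by (left; apply Rinv_0_lt_compat; lra).
  assert (E : / (1 + sn j x) * (1 + sn j x) = 1) by (field; lra).
  assert (0 < / (1 + sn j x)) by (apply Rinv_0_lt_compat; lra). nra. Qed.

Lemma gg_bound1 j : sn j (gg j) <= 1.
Proof. unfold gg. destruct (Cantor.of_nat j) as [t r]. destruct (Cantor.of_nat r) as [i r'].
  destruct (Cantor.of_nat r') as [i' m].
  destruct t as [|[|[|[|[|[|[|t]]]]]]]; try apply scal_bound; apply genv_bound. Qed.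

Lemma gg_bd : forall n, exists M, 0 <= M /\ forall j, sn n (gg j) <= M.
Proof. intro n. exists (1 + rsum (fun j => sn n (gg j)) n). split.
  pose proof (rsum_nonneg (fun j => sn n (gg j)) n (fun i => sn_nonneg _ _ n _)). lra.
  intro j. destruct (Nat.lt_ge_cases j n) as [h|h].
  - pose proof (rsum_ge (fun j => sn n (gg j)) n j (fun i => sn_nonneg _ _ n _) h). simpl in H. lra.
  - pose proof (rsum_nonneg (fun j => sn n (gg j)) n (fun i => sn_nonneg _ _ n _)).
    pose proof (sn_mono_le k X n j (gg j) h). pose proof (gg_bound1 j). lra.
Qed.


Ltac gg_unf t i i' m :=
  let j := fresh "j" in let Ej := fresh "Ej" in
  remember (code t i i' m) as j eqn:Ej;
  unfold gg; rewrite Ej at 1; unfold code; rewrite Cantor.cancel_of_to; cbv iota beta;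
  rewrite Cantor.cancel_of_to; cbv iota beta; rewrite Cantor.cancel_of_to; cbv iota beta.

Lemma gg_mem_A i : gg (code 0 i 0 0) = vscal (KofR k (/ (1 + sn (code 0 i 0 0) (eA i)))) (eA i).
Proof. gg_unf 0%nat i 0%nat 0%nat. reflexivity. Qed.
Lemma gg_mem_B i : gg (code 1 i 0 0) = vscal (KofR k (/ (1 + sn (code 1 i 0 0) (eB i)))) (eB i).
Proof. gg_unf 1%nat i 0%nat 0%nat. reflexivity. Qed.
Lemma gg_2 i i' m : gg (code 2 i i' m) = genv A dA (vadd (eA i) (eA i')) (code 2 i i' m) m.
Proof. gg_unf 2%nat i i' m. reflexivity. Qed.
Lemma gg_3 i i' m : gg (code 3 i i' m) = genv B dB (vadd (eB i) (eB i')) (code 3 i i' m) m.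
Proof. gg_unf 3%nat i i' m. reflexivity. Qed.
Lemma gg_4 i i' m : gg (code 4 i i' m) = genv A dA (vscal (lam k i') (eA i)) (code 4 i i' m) m.
Proof. gg_unf 4%nat i i' m. reflexivity. Qed.
Lemma gg_5 i i' m : gg (code 5 i i' m) = genv B dB (vscal (lam k i') (eB i)) (code 5 i i' m) m.
Proof. gg_unf 5%nat i i' m. reflexivity. Qed.
Lemma gg_6 i m : gg (code 6 i 0 m) = genv A dA (eB i) (code 6 i 0 m) m.
Proof. gg_unf 6%nat i 0%nat m. reflexivity. Qed.
Lemma gg_7 i m : gg (code 7 i 0 m) = genv B dB (eA i) (code 7 i 0 m) m.
Proof. gg_unf 7%nat i 0%nat m. reflexivity. Qed.

Lemma req_approx P dP y (f : nat -> nat) : (forall m, gg (f m) = genv P dP y (f m) m) -> approx X gg P y.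
Proof. intros Hf eps He. destruct (small_inv eps He) as [m Hm].
  exists (pick P dP y (f m) m). destruct (pick_spec P dP y (f m) m) as [HP _]. split; auto.
  assert (E : vsub y (pick P dP y (f m) m) = vscal (KofR k (/ (INR m + 1))) (gg (f m))).
  { rewrite Hf. unfold genv. rewrite vscal_assoc, KofR_mul, Rinv_l, vscal_1. reflexivity.
    pose proof (pos_INR m). lra. }
  rewrite E. eapply Dr_mono. apply Dr_gen. rewrite Kabs_KofR, Rabs_pos_eq. lra.
  left; apply inv_m_pos. Qed.

Lemma mem_approx P (x : X) : P x -> approx X gg P x.
Proof. intros Hx eps He. exists x. split; auto. rewrite vsub_refl. eapply Dr_mono. apply Dr_zero. lra. Qed.

Lemma Dr_mem_scal (x : X) j : gg j = vscal (KofR k (/ (1 + sn j x))) x -> exists t, Dr X gg t x.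
Proof. intro E. exists (Kabs k (KofR k (1 + sn j x))).
  assert (Ex : x = vscal (KofR k (1 + sn j x)) (gg j)).
  { rewrite E, vscal_assoc, KofR_mul, Rinv_r, vscal_1. reflexivity. pose proof (sn_nonneg _ _ j x). lra. }
  rewrite Ex at 2. apply Dr_gen. Qed.

Lemma Dr_eA i : exists t, Dr X gg t (eA i).
Proof. eapply Dr_mem_scal. apply gg_mem_A. Qed.
Lemma Dr_eB i : exists t, Dr X gg t (eB i).
Proof. eapply Dr_mem_scal. apply gg_mem_B. Qed.

Lemma HsA : forall a1 a2, A a1 -> A a2 -> approx X gg A (vadd a1 a2).
Proof. intros a1 a2 H1 H2. apply hA in H1 as [i <-]. apply hA in H2 as [i' <-].
  apply (req_approx A dA _ (fun m => code 2 i i' m)). intro m. apply gg_2. Qed.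
Lemma HsB : forall a1 a2, B a1 -> B a2 -> approx X gg B (vadd a1 a2).
Proof. intros a1 a2 H1 H2. apply hB in H1 as [i <-]. apply hB in H2 as [i' <-].
  apply (req_approx B dB _ (fun m => code 3 i i' m)). intro m. apply gg_3. Qed.
Lemma HcA : forall a j, A a -> approx X gg A (vscal (lam k j) a).
Proof. intros a j H1. apply hA in H1 as [i <-].
  apply (req_approx A dA _ (fun m => code 4 i j m)). intro m. apply gg_4. Qed.
Lemma HcB : forall a j, B a -> approx X gg B (vscal (lam k j) a).
Proof. intros a j H1. apply hB in H1 as [i <-].
  apply (req_approx B dB _ (fun m => code 5 i j m)). intro m. apply gg_5. Qed.

Definition good (x : X) := (exists t, Dr X gg t x) /\ approx X gg A x /\ approx X gg B x.

Lemma good_eA i : good (eA i).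
Proof. split. apply Dr_eA. split. apply mem_approx. apply hA. eauto.
  apply (req_approx B dB _ (fun m => code 7 i 0 m)). intro m. apply gg_7. Qed.
Lemma good_eB i : good (eB i).
Proof. split. apply Dr_eB. split.
  apply (req_approx A dA _ (fun m => code 6 i 0 m)). intro m. apply gg_6.
  apply mem_approx. apply hB. eauto. Qed.

Lemma good_add x y : good x -> good y -> good (vadd x y).
Proof. intros [[t1 D1] [A1 B1]] [[t2 D2] [A2 B2]]. split; [|split].
  - exists (t1 + t2). eapply Dr_add_le; eauto. lra.
  - exact (approx_add HsA A1 A2).
  - exact (approx_add HsB B1 B2).
Qed.

Lemma good_scal c x : good x -> good (vscal c x).
Proof. intros [[t D1] [A1 B1]]. split; [|split].
  - eexists. apply Dr_scal. exact D1.
  - exact (approx_scal (lam k) HcA (lam_dense k) c A1 D1).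
  - exact (approx_scal (lam k) HcB (lam_dense k) c B1 D1).
Qed.

Lemma good_genv P dP y j m : (forall a, P a -> good a) -> good y -> good (genv P dP y j m).
Proof. intros HP Hy. unfold genv. apply good_scal. unfold vsub. apply good_add; auto.
  rewrite <- vscal_m1. apply good_scal. apply HP. apply pick_spec. Qed.

Lemma goodA a : A a -> good a.
Proof. intro H. apply hA in H as [i <-]. apply good_eA. Qed.
Lemma goodB a : B a -> good a.
Proof. intro H. apply hB in H as [i <-]. apply good_eB. Qed.

Lemma good_gg j : good (gg j).
Proof. unfold gg. destruct (Cantor.of_nat j) as [t r]. destruct (Cantor.of_nat r) as [i r'].
  destruct (Cantor.of_nat r') as [i' m].
  destruct t as [|[|[|[|[|[|[|t]]]]]]].
  - apply good_scal, good_eA.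
  - apply good_scal, good_eB.
  - apply good_genv. apply goodA. apply good_add; apply good_eA.
  - apply good_genv. apply goodB. apply good_add; apply good_eB.
  - apply good_genv. apply goodA. apply good_scal, good_eA.
  - apply good_genv. apply goodB. apply good_scal, good_eB.
  - apply good_genv. apply goodA. apply good_eB.
  - apply good_genv. apply goodB. apply good_eA.
Qed.

Lemma main_fin : exists D : X -> Prop,
    banach_disk D /\
    (forall a, A a -> span D a) /\ (forall b, B b -> span D b) /\
    dense_in_XD D A /\ dense_in_XD D B.
Proof. exists (DD X gg). split; [|split; [|split; [|split]]].
  - apply DD_banach. apply gg_bd.
  - intros a Ha. destruct (goodA a Ha) as [[t Ht] _]. eapply Dr_span. exact Ht.
  - intros a Ha. destruct (goodB a Ha) as [[t Ht] _]. eapply Dr_span. exact Ht.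
  - exact (approx_dense (lam k) HsA HcA (lam_dense k) (fun j => proj1 (proj2 (good_gg j)))).
  - exact (approx_dense (lam k) HsB HcB (lam_dense k) (fun j => proj2 (proj2 (good_gg j)))).
Qed.

End Fin.

Theorem lemma4p2 (k : Kind) (X : Frechet k) (A B : X -> Prop) :
  countable_inf A -> countable_inf B -> dense_in_X A -> dense_in_X B ->
  exists D : X -> Prop,
    banach_disk D /\
    (forall a, A a -> span D a) /\ (forall b, B b -> span D b) /\
    dense_in_XD D A /\ dense_in_XD D B.
Proof. intros [eA [_ hA]] [eB [_ hB]] dA dB. exact (main_fin k X A B eA eB hA hB dA dB). Qed.
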